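(* Let $p$ be an odd prime, let $Q_0$ be an integer with $p\mid Q_0$, let $L$ and $v$ be positive integers, and let $\boldsymbol{h}=(h_1,\dots,h_L)\in\mathbb{Z}^L$. For $I\subseteq\{1,\dots,L\}$ put $H_I=\sum_{i\in I}h_i$, let $T=\{H_I: I\subseteq\{1,\dots,L\}\}$, and for $\tau\in T$ let $\mu(\tau)=\left|\{I\subseteq\{1,\dots,L\}: H_I\equiv\tau \ (\mathrm{mod}\ p^v)\}\right|$. If $2\mid\mu(\tau)$ for all $\tau\in T$, then there exists some $1\le i\le L$ such that $p\mid h_i$. *)

(* Defs.v *)
From mathcomp Require Import all_boot all_order all_algebra.
Set Implicit Arguments. Unset Strict Implicit. Unset Printing Implicit Defensive.
Import GRing.Theory Num.Theory.
Local Open Scope ring_scope.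

Definition subsum (L : nat) (h : 'I_L -> int) (I : {set 'I_L}) : int :=
  \sum_(i in I) h i.

Definition mult (L : nat) (h : 'I_L -> int) (p v : nat) (tau : int) : nat :=
  #|[set I : {set 'I_L} | (subsum h I == tau %[mod (p ^ v)%N%:Z])%Z]|.

(* Main.v *)
Require Import Defs.
From mathcomp Require Import all_boot all_order all_algebra.
From mathcomp Require Import ring lra zify.
From Stdlib Require Import Classical.
Set Implicit Arguments. Unset Strict Implicit. Unset Printing Implicit Defensive.
Import GRing.Theory Num.Theory.
Local Open Scope ring_scope.

Section Aux.
Variables (L : nat) (h : 'I_L -> int) (M : nat).
Let m : int := M%:Z.

Definition cnt (A : {set 'I_L}) (r : int) : nat :=
  #|[set I : {set 'I_L} | (I \subset A) && (subsum h I == r %[mod m])%Z]|.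

Lemma cnt_mod (A : {set 'I_L}) (r r' : int) : (r %% m = r' %% m)%Z -> cnt A r = cnt A r'.
Proof. by move=> E; apply: eq_card => I; rewrite !inE E. Qed.

Lemma cnt0 (r : int) : cnt set0 r = if (0 == r %[mod m])%Z then 1%N else 0%N.
Proof.
case: ifP => Hc; [apply: (@eq_card1 _ set0) | apply: eq_card0] => I;
  rewrite !inE subset0; case: eqP => [->|] //=; by rewrite /subsum big_set0 Hc.
Qed.

Lemma modshift (x y c : int) : (c + x == y %[mod m])%Z = (x == y - c %[mod m])%Z.
Proof.
rewrite !eqz_mod_dvd; have -> : c + x - y = x - (y - c) by ring. by [].
Qed.

Lemma cnt_rec (a : 'I_L) (A : {set 'I_L}) (r : int) : a \notin A -> cnt (a |: A) r = (cnt A r + cnt A (r - h a))%N.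
Proof.
move=> aA; rewrite /cnt -(cardsID [set I : {set 'I_L} | a \in I]) addnC.
congr (_ + _)%N.
- apply: eq_card => I; rewrite !inE.
  case aI: (a \in I) => /=.
  + symmetry; apply/negbTE/negP => /andP[/subsetP sub _]; move: (sub a aI).
    by rewrite (negbTE aA).
  + congr (_ && _); apply/idP/idP => sub; apply/subsetP => x xI.
    * have := subsetP sub x xI; rewrite in_setU1; case/orP => // /eqP xa.
      by rewrite -xa xI in aI.
    * by rewrite in_setU1 (subsetP sub x xI) orbT.
- set S' := [set I : {set 'I_L} | (I \subset A) && (subsum h I == (r - h a) %[mod m])%Z].
  have inj : {in S' &, injective (fun J => a |: J)}.
    move=> J1 J2; rewrite !inE => /andP[s1 _] /andP[s2 _] E.
    have n1 : a \notin J1 by apply: contra aA; apply: (subsetP s1).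
    have n2 : a \notin J2 by apply: contra aA; apply: (subsetP s2).
    by rewrite -(setU1K n1) -(setU1K n2) E.
  rewrite -(card_in_imset inj).
  apply: eq_card => I; rewrite !inE; apply/idP/imsetP.
  + case/andP=> /andP[sub HP] aI; exists (I :\ a); last by rewrite setD1K.
    rewrite inE; apply/andP; split.
    * apply/subsetP => x; rewrite in_setD1 => /andP[xa xI].
      by have := subsetP sub x xI; rewrite in_setU1 (negbTE xa).
    * by move: HP; rewrite /subsum (big_setD1 _ aI) /= modshift.
  + case=> J; rewrite inE => /andP[sub HP] ->; rewrite setU11 andbT.
    have aJ : a \notin J by apply: contra aA; apply: (subsetP sub).
    rewrite setUS //=.
    by rewrite /subsum big_setU1 //= modshift.
Qed.

Lemma iter_par (g : int -> bool) (c : int) (b : bool) :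
  (forall r, g (r + c) = b (+) g r) ->
  forall r (k : nat), g (r + k%:Z * c) = (b && odd k) (+) g r.
Proof.
move=> H r; elim=> [|k IH]; first by rewrite mul0r addr0 andbF.
have -> : r + k.+1%:Z * c = (r + k%:Z * c) + c.
  by rewrite -[k.+1]addn1 PoszD mulrDl mul1r addrA.
rewrite H IH /=; by destruct b, (odd k), (g r).
Qed.

Lemma bez (c : int) : m != 0 -> coprimez c m ->
  forall r r', exists k : nat, (r' %% m = (r + k%:Z * c) %% m)%Z.
Proof.
move=> m0 cop r r'.
have [u [v E]] := Bezoutz c m.
move: cop; rewrite /coprimez => /eqP cop; rewrite cop in E.
set w := ((r' - r) * u)%Z.
exists `|(w %% m)%Z|%N.
rewrite gez0_abs; last exact: modz_ge0.
apply/eqP; rewrite -/(r' == _ %[mod m])%Z eqz_mod_dvd.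
have Ew := divz_eq w m.
have -> : r' - (r + (w %% m)%Z * c) = ((r' - r) * v + (w %/ m)%Z * c) * m.
  have -> : (w %% m)%Z = w - (w %/ m)%Z * m by rewrite {2}Ew; ring.
  rewrite /w.
  have -> : r' - (r + ((r' - r) * u - ((r' - r) * u %/ m)%Z * m) * c) =
     (r' - r) * (1 - u * c) + ((r' - r) * u %/ m)%Z * c * m by ring.
  rewrite -E; ring.
by apply: dvdz_mull; apply: dvdzz.
Qed.

Lemma main (A : {set 'I_L}) : (1 < M)%N -> odd M ->
  (forall a, a \in A -> coprimez (h a) m) ->
  exists r1 r2, odd (cnt A r1) /\ ~~ odd (cnt A r2).
Proof.
move=> M1 oM; move: {2}#|A| (erefl #|A|) => n; elim: n A => [|n IH] A cA cop.
- have -> : A = set0 by apply/eqP; rewrite -cards_eq0 cA.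
  exists 0, 1; rewrite !cnt0 eqxx /=; split => //.
  rewrite mod0z modz_small ?ltz_nat //.
- case: (set_0Vmem A) => [A0|[a aA]]; first by rewrite A0 cards0 in cA.
  set A' := A :\ a.
  have cA' : #|A'| = n by move: cA; rewrite (cardsD1 a A) aA add1n => -[].
  have cop' : forall b, b \in A' -> coprimez (h b) m.
    by move=> b; rewrite in_setD1 => /andP[_ /cop].
  have [r1 [r2 [o1 e2]]] := IH A' cA' cop'.
  have aA' : a \notin A' by rewrite in_setD1 eqxx.
  have AE : A = a |: A' by rewrite setD1K.
  apply: NNPP => Hn.
  have alt : (forall r, ~~ odd (cnt A r)) \/ (forall r, odd (cnt A r)).
    case: (classic (exists r, odd (cnt A r))) => [[s os]|Hs].
    + right => r; apply/negPn/negP => e; apply: Hn; by exists s, r.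
    + left => r; apply/negP => o; apply: Hs; by exists r.
  pose g r := odd (cnt A' r).
  have rec : forall r, g (r + h a) = odd (cnt A (r + h a)) (+) g r.
    move=> r; rewrite AE cnt_rec // addrK oddD /g.
    by case: (odd (cnt A' (r + h a))); case: (odd (cnt A' r)).
  have m0 : m != 0 by rewrite /m; apply/eqP => -[] E; rewrite E in M1.
  case: alt => [Hall|Hall].
  + have H : forall r, g (r + h a) = false (+) g r.
      by move=> r; rewrite rec (negbTE (Hall _)).
    have [k Ek] := bez m0 (cop a aA) r1 r2.
    have := iter_par H r1 k; rewrite -/(g _) /g -(cnt_mod _ Ek) /=.
    by rewrite (negbTE e2) o1.
  + have H : forall r, g (r + h a) = true (+) g r.
      by move=> r; rewrite rec Hall.
    have := iter_par H r1 M; rewrite oM /g.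
    have -> : cnt A' (r1 + M%:Z * h a) = cnt A' r1.
      apply: cnt_mod; by rewrite addrC mulrC modzMDl.
    by rewrite o1.
Qed.

End Aux.

Theorem lemma5p5 (p : nat) (Q0 : int) (L v : nat) (h : 'I_L -> int) :
  prime p -> odd p -> (p%:Z %| Q0)%Z -> (0 < L)%N -> (0 < v)%N ->
  (forall tau : int, (exists I : {set 'I_L}, tau = subsum h I) ->
     ~~ odd (mult h p v tau)) ->
  exists i : 'I_L, (p%:Z %| h i)%Z.
Proof.
move=> pp op _ _ v0 Hmu.
case: (boolP [exists i, (p%:Z %| h i)%Z]) => [/existsP[i Hi]|Hno].
  by exists i.
exfalso.
have M1 : (1 < p ^ v)%N.
  have := @leq_pexp2l p 1 v (prime_gt0 pp); rewrite expn1 v0 => H; have {}H : (p <= p ^ v)%N by rewrite H.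
  exact: leq_trans (prime_gt1 pp) H.
have oM : odd (p ^ v) by rewrite oddX op orbT.
have cop : forall a, a \in [set: 'I_L] -> coprimez (h a) (p ^ v)%N%:Z.
  move=> a _; rewrite coprimezE /= coprimeXr // coprime_sym prime_coprime //.
  apply/negP => d; move/negP: Hno; apply; apply/existsP; exists a.
  by rewrite dvdzE /=.
have [r1 [_ [o1 _]]] := @main L h (p ^ v) [set: 'I_L] M1 oM cop.
have : (0 < cnt h (p ^ v) [set: 'I_L] r1)%N by apply: contraLR o1; rewrite -leqNgt leqn0 => /eqP ->.
case/card_gt0P => I; rewrite inE => /andP[_ HI].
have := Hmu (subsum h I) (ex_intro _ I erefl).
have -> : mult h p v (subsum h I) = cnt h (p ^ v) [set: 'I_L] r1.
  rewrite /mult -(cnt_mod _ _ (eqP HI)).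
  by apply: eq_card => J; rewrite !inE subsetT.
by rewrite o1.
Qed.
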